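(* $\deg_{\rm top}(R)=\deg_{\rm top}(\mathcal R)=8$.
   Context: The topological degree $\deg_{\rm top}$ of a rational map $\mathbb{CP}^2\dashrightarrow\mathbb{CP}^2$ is the number of preimages of a generic point. $R[U:V:W]=[(U^2+V^2)^2:V^2(U+W)^2:(V^2+W^2)^2]$ and $\mathcal R[Z:T:Y]=[Z^2(Z^2+T^2)^2:T^2(Z^2+Y^2)^2:(Z^2+T^2)(T^2Z^2+Y^4)]$ (in affine coordinates $z=Z/Y$, $t=T/Y$, $\mathcal R(z,t)=\big(\frac{z^2+t^2}{z^{-2}+t^2},\frac{z^2+z^{-2}+2}{z^2+z^{-2}+t^2+t^{-2}}\big)$). *)

(* Defs.v *)
From HB Require Import structures.
From mathcomp Require Import all_boot all_order all_algebra.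
From mathcomp Require Import complex.
From mathcomp Require Import Rstruct.
From mathcomp Require Import mpoly.
From Stdlib Require Rdefinitions.

Set Implicit Arguments.
Unset Strict Implicit.
Unset Printing Implicit Defensive.

Import Order.TTheory GRing.Theory Num.Theory.
Local Open Scope ring_scope.
Local Open Scope complex_scope.

Notation C := (Rdefinitions.R)[i].

(* Points of C^3 (homogeneous coordinates of CP^2). *)
Definition C3 : Type := (C * C * C)%type.

Definition nonzero3 (u : C3) : Prop :=
  u.1.1 <> 0 \/ u.1.2 <> 0 \/ u.2 <> 0.

Definition proj_eq (u v : C3) : Prop :=
  exists lam : C, lam <> 0 /\
    u.1.1 = lam * v.1.1 /\ u.1.2 = lam * v.1.2 /\ u.2 = lam * v.2.

Definition coords (u : C3) : 'I_3 -> C :=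
  fun i => nth 0 [:: u.1.1; u.1.2; u.2] i.

(* The rational map CP^2 --> CP^2 given by a triple F of homogeneous
   polynomials of a common degree (here given as a function C^3 -> C^3).
   A point [p] (p nonzero) lies in the domain of definition iff F p is
   nonzero; then its image is [F p]. *)
Definition in_fiber (F : C3 -> C3) (q p : C3) : Prop :=
  nonzero3 p /\ nonzero3 (F p) /\ proj_eq (F p) q.

Definition fiber_card (F : C3 -> C3) (q : C3) (k : nat) : Prop :=
  exists ps : seq C3,
    size ps = k /\
    (forall p, p \in ps -> in_fiber F q p) /\
    (forall i j : nat, (i < k)%N -> (j < k)%N -> i <> j ->
        ~ proj_eq (nth (0, 0, 0) ps i) (nth (0, 0, 0) ps j)) /\
    (forall p, in_fiber F q p -> exists2 p', p' \in ps & proj_eq p p').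

(* deg_top F = k : the number of preimages of a generic point is k, i.e.
   there is a nonzero polynomial h such that every point [q] with h(q) <> 0
   has exactly k preimages. *)
Definition deg_top_eq (F : C3 -> C3) (k : nat) : Prop :=
  exists h : mpoly.mpoly 3 C, h != 0 /\
    forall q : C3, nonzero3 q -> mpoly.meval (coords q) h != 0 ->
      fiber_card F q k.

Definition Rmap (x : C3) : C3 :=
  let: (U, V, W) := x in
  ((U ^+ 2 + V ^+ 2) ^+ 2, V ^+ 2 * (U + W) ^+ 2, (V ^+ 2 + W ^+ 2) ^+ 2).

Definition calRmap (x : C3) : C3 :=
  let: (Z, T, Y) := x in
  (Z ^+ 2 * (Z ^+ 2 + T ^+ 2) ^+ 2,
   T ^+ 2 * (Z ^+ 2 + Y ^+ 2) ^+ 2,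
   (Z ^+ 2 + T ^+ 2) * (T ^+ 2 * Z ^+ 2 + Y ^+ 4)).

(* Main.v *)
Require Import Defs.
From HB Require Import structures.
From mathcomp Require Import all_boot all_order all_algebra complex Rstruct.
From mathcomp Require Import ring.
From mathcomp Require Import mpoly.
Import Order.TTheory GRing.Theory Num.Theory.
Local Open Scope ring_scope.

Definition Qm (p : C3) : C3 :=
  let: (U, V, W) := p in (U ^+ 2 + V ^+ 2, V * (U + W), V ^+ 2 + W ^+ 2).

Lemma Rmap_Qm U V W : Rmap (U, V, W) =
  ((Qm (U,V,W)).1.1 ^+ 2, (Qm (U,V,W)).1.2 ^+ 2, (Qm (U,V,W)).2 ^+ 2).
Proof. rewrite /=; congr ((_, _), _); ring. Qed.

Definition Pt (x y z s : C) : C3 :=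
  ((s + (x - z) / s) / 2, y / s, (s - (x - z) / s) / 2).

Lemma two_neq0 : (2 : C) != 0.
Proof. by rewrite pnatr_eq0. Qed.

Lemma Qm_Pt x y z s d : s != 0 -> d ^+ 2 = x * z - y ^+ 2 ->
  s ^+ 2 = x + z + 2 * d -> Qm (Pt x y z s) = (x, y, z).
Proof.
move=> s0 hd hs.
have hy : y ^+ 2 = x * z - d ^+ 2 by rewrite hd; ring.
have hdd : d = (s ^+ 2 - x - z) / 2.
  by rewrite hs; field.
have t2 := two_neq0.
rewrite /Qm /Pt /=; congr ((_, _), _).
- rewrite [(y / s) ^+ 2]expr_div_n hy hdd; field; by rewrite ?t2 ?s0.
- by field.
- rewrite [(y / s) ^+ 2]expr_div_n hy hdd; field; by rewrite ?t2 ?s0.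
Qed.


Definition sg (e : bool) : C := if e then 1 else -1.

Lemma sg2 e : sg e ^+ 2 = 1.
Proof. by case: e => /=; ring. Qed.

Lemma sg_neq0 e : sg e != 0.
Proof. by case: e => /=; rewrite ?oppr_eq0 oner_eq0. Qed.

Lemma sg_inj (e e' : bool) (v : C) : v != 0 -> sg e * v = sg e' * v -> e = e'.
Proof.
move=> v0 h; have h2 : (sg e - sg e') * v = 0 by rewrite mulrBl h subrr.
clear h.
move/eqP: h2; rewrite mulf_eq0 (negbTE v0) orbF => /eqP.
case: e; case: e' => //= h3; exfalso; move/eqP: two_neq0; apply.
- by rewrite -h3; ring.
- by rewrite -[RHS]oppr0 -h3; ring.
Qed.

Lemma sq_sign (u v : C) : u ^+ 2 = v ^+ 2 -> exists e, u = sg e * v.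
Proof.
move/eqP; rewrite eqf_sqr => /orP [/eqP -> | /eqP ->].
- by exists true; rewrite /= mul1r.
- by exists false; rewrite /= mulN1r.
Qed.

Lemma sq_sqrt (u v : C) : u ^+ 2 = v -> exists e, u = sg e * sqrtC v.
Proof. by move=> h; apply: sq_sign; rewrite sqrtCK. Qed.

Lemma prod_neq0l (x y : C) : x * y != 0 -> x != 0.
Proof. by apply: contra_neq => ->; rewrite mul0r. Qed.
Lemma prod_neq0r (x y : C) : x * y != 0 -> y != 0.
Proof. by apply: contra_neq => ->; rewrite mulr0. Qed.


Lemma Rmap_Qm' p : Rmap p = ((Qm p).1.1 ^+ 2, (Qm p).1.2 ^+ 2, (Qm p).2 ^+ 2).
Proof. by case: p => [[U V] W] /=; congr ((_, _), _); ring. Qed.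

Lemma Qm_proj (u v : C3) lam : u.1.1 = lam * v.1.1 -> u.1.2 = lam * v.1.2 ->
  u.2 = lam * v.2 ->
  Qm u = (lam ^+ 2 * (Qm v).1.1, lam ^+ 2 * (Qm v).1.2, lam ^+ 2 * (Qm v).2).
Proof.
case: u => [[U V] W]; case: v => [[U' V'] W'] /= -> -> ->.
by congr ((_, _), _); ring.
Qed.

Lemma Pt_sum x y z s : (Pt x y z s).1.1 + (Pt x y z s).2 = s.
Proof. by rewrite /Pt /=; set d := (x - z) / s; field. Qed.

Lemma nonzero3_of (U V W : C) : ~ (U = 0 /\ V = 0 /\ W = 0) -> nonzero3 (U, V, W).
Proof.
move=> h; rewrite /nonzero3 /=.
case: (eqVneq U 0) => hU; last by left; apply/eqP.
case: (eqVneq V 0) => hV; last by right; left; apply/eqP.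
case: (eqVneq W 0) => hW; last by right; right; apply/eqP.
by exfalso; apply: h.
Qed.

Definition Rdelta (al be ga : C) (e3 r : bool) : C :=
  sg r * sqrtC (al * (sg e3 * ga) - be ^+ 2).
Definition Rs (al be ga : C) (e3 r : bool) : C :=
  sqrtC (al + sg e3 * ga + 2 * Rdelta al be ga e3 r).
Definition Rpt (al be ga : C) (t : bool * bool * bool) : C3 :=
  Pt al (sg t.1.1 * be) (sg t.1.2 * ga) (Rs al be ga t.1.2 t.2).

Definition idx8 : seq (bool * bool * bool) :=
  [:: (true, true, true); (true, true, false); (true, false, true);
      (true, false, false); (false, true, true); (false, true, false);
      (false, false, true); (false, false, false)].

Lemma idx8_all t : t \in idx8.
Proof. by case: t => [[[] []] []]. Qed.

Lemma idx8_uniq : uniq idx8.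
Proof. by []. Qed.


Lemma RD_neq0 (al be ga : C) e3 : al ^+ 2 * ga ^+ 2 - be ^+ 4 != 0 ->
  al * (sg e3 * ga) - be ^+ 2 != 0.
Proof.
move=> H.
have E : (al * (sg e3 * ga) - be ^+ 2) * (al * (sg (~~ e3) * ga) - be ^+ 2)
   = - (al ^+ 2 * ga ^+ 2 - be ^+ 4) by case: e3 => /=; ring.
by apply: (@prod_neq0l _ (al * (sg (~~ e3) * ga) - be ^+ 2)); rewrite E oppr_eq0.
Qed.

Lemma RS_neq0 (al be ga : C) e3 r :
  (al ^+ 2 + ga ^+ 2 + 4 * be ^+ 2) ^+ 2 - 4 * al ^+ 2 * ga ^+ 2 != 0 ->
  al + sg e3 * ga + 2 * Rdelta al be ga e3 r != 0.
Proof.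
move=> H; rewrite /Rdelta; set w := sqrtC _.
have hw : w ^+ 2 = al * (sg e3 * ga) - be ^+ 2 by rewrite sqrtCK.
have E1 : (al + sg e3 * ga + 2 * (sg r * w)) * (al + sg e3 * ga + 2 * (sg (~~ r) * w))
   = (al + sg e3 * ga) ^+ 2 - 4 * w ^+ 2 by case: r => /=; ring.
rewrite hw in E1.
have E2 : ((al + sg e3 * ga) ^+ 2 - 4 * (al * (sg e3 * ga) - be ^+ 2)) *
          ((al + sg (~~ e3) * ga) ^+ 2 - 4 * (al * (sg (~~ e3) * ga) - be ^+ 2))
   = (al ^+ 2 + ga ^+ 2 + 4 * be ^+ 2) ^+ 2 - 4 * al ^+ 2 * ga ^+ 2
   by case: e3 {E1 w hw} => /=; ring.
apply: (@prod_neq0l _ (al + sg e3 * ga + 2 * (sg (~~ r) * w))); rewrite E1.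
by apply: (@prod_neq0l _ ((al + sg (~~ e3) * ga) ^+ 2 - 4 * (al * (sg (~~ e3) * ga) - be ^+ 2))); rewrite E2.
Qed.


Lemma Rs_neq0 (al be ga : C) e3 r :
  (al ^+ 2 + ga ^+ 2 + 4 * be ^+ 2) ^+ 2 - 4 * al ^+ 2 * ga ^+ 2 != 0 ->
  Rs al be ga e3 r != 0.
Proof. by move=> H; rewrite /Rs sqrtC_eq0; apply: RS_neq0. Qed.

Lemma Rpt_Qm (al be ga : C) t :
  (al ^+ 2 + ga ^+ 2 + 4 * be ^+ 2) ^+ 2 - 4 * al ^+ 2 * ga ^+ 2 != 0 ->
  Qm (Rpt al be ga t) = (al, sg t.1.1 * be, sg t.1.2 * ga).
Proof.
move=> H; case: t => [[e2 e3] r] /=.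
apply: (@Qm_Pt _ _ _ _ (Rdelta al be ga e3 r)).
- exact: Rs_neq0.
- by rewrite /Rdelta exprMn sg2 mul1r sqrtCK exprMn sg2 mul1r.
- by rewrite /Rs sqrtCK.
Qed.

Lemma Rpt_in_fiber (al be ga : C) t : al != 0 ->
  (al ^+ 2 + ga ^+ 2 + 4 * be ^+ 2) ^+ 2 - 4 * al ^+ 2 * ga ^+ 2 != 0 ->
  in_fiber Rmap (al ^+ 2, be ^+ 2, ga ^+ 2) (Rpt al be ga t).
Proof.
move=> a0 H.
have hQ := Rpt_Qm al be ga t H.
have hR : Rmap (Rpt al be ga t) = (al ^+ 2, be ^+ 2, ga ^+ 2).
  by rewrite Rmap_Qm' hQ /= !exprMn !sg2 !mul1r.
split; last split.
- move: hQ; case: (Rpt al be ga t) => [[U V] W] hQ; apply: nonzero3_of.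
  move=> [hU [hV hW]]; move: hQ; rewrite hU hV /= => -[h0 _ _].
  by move/eqP: a0; apply; rewrite -h0; ring.
- by rewrite hR; left; apply/eqP; rewrite /= expf_eq0.
- by rewrite hR; exists 1; rewrite !mul1r; split => //; apply/eqP; rewrite oner_eq0.
Qed.

Lemma Rpt_inj (al be ga : C) t t' : al != 0 -> be != 0 -> ga != 0 ->
  al ^+ 2 * ga ^+ 2 - be ^+ 4 != 0 ->
  (al ^+ 2 + ga ^+ 2 + 4 * be ^+ 2) ^+ 2 - 4 * al ^+ 2 * ga ^+ 2 != 0 ->
  proj_eq (Rpt al be ga t) (Rpt al be ga t') -> t = t'.
Proof.
move=> a0 b0 g0 HD H [lam [l0 [h1 [h2 h3]]]].
have hQ := Qm_proj _ _ _ h1 h2 h3.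
rewrite !Rpt_Qm // in hQ.
case: hQ => hx hy hz.
have l2 : lam ^+ 2 = 1.
  by apply: (mulIf a0); rewrite mul1r -hx.
rewrite l2 !mul1r in hy hz.
move: t t' h1 h2 h3 hy hz => [[e2 e3] r] [[e2' e3'] r'] h1 h2 h3 hy hz.
have hs : Rs al be ga e3 r = lam * Rs al be ga e3' r'.
  have S1 := Pt_sum al (sg e2 * be) (sg e3 * ga) (Rs al be ga e3 r).
  have S2 := Pt_sum al (sg e2' * be) (sg e3' * ga) (Rs al be ga e3' r').
  rewrite -S1 -S2 mulrDr; exact: (congr2 +%R h1 h3).
rewrite /= in hy hz.
have E2 := sg_inj _ _ _ b0 hy; have E3 := sg_inj _ _ _ g0 hz; subst e2' e3'.
have hs2 : Rs al be ga e3 r ^+ 2 = Rs al be ga e3 r' ^+ 2 by rewrite hs exprMn l2 mul1r.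
rewrite /Rs !sqrtCK in hs2.
have hd : Rdelta al be ga e3 r = Rdelta al be ga e3 r'.
  apply: (mulfI two_neq0); apply: (addrI (al + sg e3 * ga)); exact: hs2.
move: hd; rewrite /Rdelta => /(sg_inj r r').
have w0 : sqrtC (al * (sg e3 * ga) - be ^+ 2) != 0 by rewrite sqrtC_eq0 RD_neq0.
by move=> /(_ w0) ->.
Qed.


Lemma Pt_decomp (U V W : C) : U + W != 0 ->
  (U, V, W) = Pt (U ^+ 2 + V ^+ 2) (V * (U + W)) (V ^+ 2 + W ^+ 2) (U + W).
Proof.
move=> s0; rewrite /Pt; congr ((_, _), _); field => //; by rewrite ?two_neq0 ?s0.
Qed.

Lemma Pt_rel (U V W : C) :
  ((U + W) ^+ 2 - (U ^+ 2 + V ^+ 2) - (V ^+ 2 + W ^+ 2)) ^+ 2 =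
  4 * ((U ^+ 2 + V ^+ 2) * (V ^+ 2 + W ^+ 2) - (V * (U + W)) ^+ 2).
Proof. ring. Qed.

Lemma Pt_sg x y z s e : s != 0 ->
  Pt x y z (sg e * s) = (sg e * (Pt x y z s).1.1, sg e * (Pt x y z s).1.2,
                         sg e * (Pt x y z s).2).
Proof.
move=> s0; rewrite /Pt /=; case: e => /=; congr ((_, _), _); field => //;
  by rewrite ?two_neq0 ?s0 ?oppr_eq0 ?oner_eq0.
Qed.

Lemma times_div (u t : C) : t != 0 -> u = t * (u / t).
Proof. by move=> t0; rewrite mulrC divfK. Qed.


Lemma R_complete (al be ga : C) p : al != 0 -> be != 0 -> ga != 0 ->
  al ^+ 2 * ga ^+ 2 - be ^+ 4 != 0 ->
  (al ^+ 2 + ga ^+ 2 + 4 * be ^+ 2) ^+ 2 - 4 * al ^+ 2 * ga ^+ 2 != 0 ->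
  in_fiber Rmap (al ^+ 2, be ^+ 2, ga ^+ 2) p ->
  exists t, proj_eq p (Rpt al be ga t).
Proof.
move=> a0 b0 g0 HD H.
case: p => [[U V] W] [_ [_ [lam [l0 [h1 [h2 h3]]]]]].
rewrite /= in h1 h2 h3.
set X := U ^+ 2 + V ^+ 2 in h1.
set Z := V ^+ 2 + W ^+ 2 in h3.
set Y := V * (U + W).
have h2' : Y ^+ 2 = lam * be ^+ 2 by rewrite exprMn.
have la0 : lam * al ^+ 2 != 0 by rewrite mulf_neq0 ?expf_neq0 //; apply/eqP.
have X0 : X != 0 by move: la0; rewrite -h1 expf_eq0.
set mu := X / al.
have Xmu : X = mu * al by rewrite /mu divfK.
have mu0 : mu != 0 by move: X0; rewrite Xmu; apply: prod_neq0l.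
have lmu : lam = mu ^+ 2.
  by apply: (mulIf (expf_neq0 2 a0)); rewrite -h1 Xmu exprMn.
have [e2 hY] : exists e, Y = sg e * (mu * be).
  by apply: sq_sign; rewrite h2' lmu -exprMn.
have [e3 hZ] : exists e, Z = sg e * (mu * ga).
  by apply: sq_sign; rewrite h3 lmu -exprMn.
set tt := sqrtC mu.
have ht2 : tt ^+ 2 = mu by rewrite sqrtCK.
have tt0 : tt != 0 by rewrite sqrtC_eq0.
have hX' : (U / tt) ^+ 2 + (V / tt) ^+ 2 = al.
  rewrite !expr_div_n -mulrDl -/X Xmu -ht2; field; by rewrite ?tt0.
have hY' : V / tt * (U / tt + W / tt) = sg e2 * be.
  have -> : V / tt * (U / tt + W / tt) = Y / tt ^+ 2 by rewrite /Y; field.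
  rewrite hY -ht2; field; by rewrite ?tt0.
have hZ' : (V / tt) ^+ 2 + (W / tt) ^+ 2 = sg e3 * ga.
  rewrite !expr_div_n -mulrDl -/Z hZ -ht2; field; by rewrite ?tt0.
have s0 : U / tt + W / tt != 0.
  apply/eqP => s0; move: hY'; rewrite s0 mulr0 => /esym; apply/eqP.
  exact: mulf_neq0 (sg_neq0 e2) b0.
have hP := Pt_decomp (U / tt) (V / tt) (W / tt) s0.
have hR := Pt_rel (U / tt) (V / tt) (W / tt).
rewrite hX' hY' hZ' in hP hR.
set s := U / tt + W / tt in hP hR s0.
set D := al * (sg e3 * ga) - be ^+ 2.
have [r hr] : exists r, s ^+ 2 - al - sg e3 * ga = sg r * (2 * sqrtC D).
  apply: sq_sign; rewrite hR [in RHS]exprMn sqrtCK /D [(sg e2 * be) ^+ 2]exprMn sg2; ring.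
have [sig hsig] : exists e, s = sg e * Rs al be ga e3 r.
  apply: sq_sqrt; rewrite /Rdelta -/D.
  have -> : s ^+ 2 = (s ^+ 2 - al - sg e3 * ga) + al + sg e3 * ga by ring.
  rewrite hr; ring.
rewrite hsig Pt_sg in hP; last exact: Rs_neq0.
case: hP => hU hV hW.
exists (e2, e3, r); exists (tt * sg sig); split.
  by apply/eqP; rewrite mulf_neq0 ?sg_neq0.
rewrite /Rpt /=.
split; last split.
- by rewrite (times_div U tt tt0) hU mulrA.
- by rewrite (times_div V tt tt0) hV mulrA.
- by rewrite (times_div W tt tt0) hW mulrA.
Qed.


Definition Gm (A B C0 : C) : C3 :=
  (A * (A + B) ^+ 2, B * (A + C0) ^+ 2, (A + B) * (A * B + C0 ^+ 2)).

Lemma calR_G Z T Y : calRmap (Z, T, Y) = Gm (Z ^+ 2) (T ^+ 2) (Y ^+ 2).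
Proof. by rewrite /calRmap /Gm; congr ((_, _), _); ring. Qed.

Definition kk (a b c : C) := a * b - a * c + c ^+ 2.
Definition disc (a b c : C) := a ^+ 2 * b ^+ 2 - kk a b c * (a * (a + b - c)).
Definition qq (a b c A : C) := kk a b c * A ^+ 2 - 2 * (a * b) * A + a * (a + b - c).
Definition Aroot (a b c : C) (r : bool) := (a * b + sg r * sqrtC (disc a b c)) / kk a b c.
Definition Broot (a b c A : C) := (c * A ^+ 2 - a) / (A * (a - c)).
Definition cpt (a b c : C) (t : bool * bool * bool) : C3 :=
  (sg t.1.2 * sqrtC (Aroot a b c t.1.1),
   sg t.2 * sqrtC (Broot a b c (Aroot a b c t.1.1)), 1).

Lemma qq_Aroot a b c r : kk a b c != 0 -> qq a b c (Aroot a b c r) = 0.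
Proof.
move=> k0; rewrite /qq /Aroot.
have hw : sqrtC (disc a b c) ^+ 2 = disc a b c by rewrite sqrtCK.
move: hw; rewrite /disc; set w := sqrtC _ => hw.
apply: (mulfI k0); rewrite mulr0.
have -> : kk a b c * (kk a b c * ((a * b + sg r * w) / kk a b c) ^+ 2 -
    2 * (a * b) * ((a * b + sg r * w) / kk a b c) + a * (a + b - c))
  = sg r ^+ 2 * w ^+ 2 - (a ^+ 2 * b ^+ 2 - kk a b c * (a * (a + b - c))).
  by field.
by rewrite sg2 mul1r hw subrr.
Qed.

Lemma qq_root a b c A : kk a b c != 0 -> qq a b c A = 0 -> exists r, A = Aroot a b c r.
Proof.
move=> k0 hq.
have [r hr] : exists r, kk a b c * A - a * b = sg r * sqrtC (disc a b c).
  apply: sq_sqrt; rewrite /disc.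
  have -> : (kk a b c * A - a * b) ^+ 2 = kk a b c * qq a b c A +
       (a ^+ 2 * b ^+ 2 - kk a b c * (a * (a + b - c))) by rewrite /qq; ring.
  by rewrite hq mulr0 add0r.
exists r; rewrite /Aroot -hr; field; done.
Qed.


Lemma qq_A0 a b c A : a * (a + b - c) != 0 -> qq a b c A = 0 -> A != 0.
Proof.
move=> h hq; apply/eqP => A0; move: h; rewrite -hq A0 /qq; apply/negP/negPn/eqP; ring.
Qed.

Lemma qq_Am1 a b c A : (a - c) ^+ 2 + 4 * a * b != 0 -> qq a b c A = 0 -> A + 1 != 0.
Proof.
move=> h hq; apply/eqP => A0; move: h; rewrite -hq (_ : A = -1); last first.
  by rewrite -[A]addr0 -(subrr 1) addrA A0 sub0r.
by rewrite /qq /kk; apply/negP/negPn/eqP; ring.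
Qed.

Lemma qq_A1 a b c A : a - c != 0 -> qq a b c A = 0 -> A - 1 != 0.
Proof.
move=> h hq; apply/eqP => A0; move: (expf_neq0 2 h); rewrite -hq (_ : A = 1); last first.
  by rewrite -[A]subr0 -A0; ring.
by rewrite /qq /kk; apply/negP/negPn/eqP; ring.
Qed.

Lemma Broot_neq0 a b c A : a != 0 -> b != 0 -> c != 0 -> a - c != 0 ->
  A != 0 -> qq a b c A = 0 -> Broot a b c A != 0.
Proof.
move=> a0 b0 c0 ac0 A0 hq; apply/eqP => hB.
have hn : c * A ^+ 2 - a = 0.
  have : Broot a b c A * (A * (a - c)) = c * A ^+ 2 - a by rewrite /Broot divfK // mulf_neq0.
  by rewrite hB mul0r => <-.
have E : c * qq a b c A - kk a b c * (c * A ^+ 2 - a) = a * b * (a + c - 2 * c * A).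
  by rewrite /qq /kk; ring.
rewrite hq hn !mulr0 subrr in E.
have E2 : a + c - 2 * c * A = 0.
  by move/eqP: E; rewrite eq_sym mulf_eq0 mulf_eq0 (negbTE a0) (negbTE b0) /= => /eqP.
have : (a - c) ^+ 2 = 0.
  have -> : (a - c) ^+ 2 = (a + c - 2 * c * A) * (a + c + 2 * c * A) + 4 * c * (c * A ^+ 2 - a).
    by ring.
  by rewrite E2 hn mul0r mulr0 addr0.
by move/eqP; rewrite expf_eq0 /= (negbTE ac0).
Qed.

Lemma G_root a b c A : c != 0 -> a - c != 0 -> A != 0 -> qq a b c A = 0 ->
  Gm A (Broot a b c A) 1 =
  ((A + Broot a b c A) * (A * Broot a b c A + 1) / c * a,
   (A + Broot a b c A) * (A * Broot a b c A + 1) / c * b,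
   (A + Broot a b c A) * (A * Broot a b c A + 1) / c * c).
Proof.
move=> c0 ac0 A0 hq; rewrite /Gm expr1n; congr ((_, _), _).
- by rewrite /Broot; field; rewrite ?c0 ?ac0 ?A0.
- apply/eqP; rewrite -subr_eq0; apply/eqP.
  have -> : Broot a b c A * (A + 1) ^+ 2 -
    (A + Broot a b c A) * (A * Broot a b c A + 1) / c * b =
    - ((A + 1) ^+ 2 * qq a b c A / (A * (a - c) ^+ 2)).
    by rewrite /Broot /qq /kk; field; rewrite ?c0 ?ac0 ?A0.
  by rewrite hq mulr0 mul0r oppr0.
- by field.
Qed.


Definition ccond (a b c : C) : Prop :=
  [/\ a != 0, b != 0, c != 0, a - c != 0 &
      [/\ kk a b c != 0, disc a b c != 0, (a - c) ^+ 2 + 4 * a * b != 0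
        & a * (a + b - c) != 0]].

Lemma lam_neq0 a b c A : c != 0 -> a != 0 -> a - c != 0 -> A != 0 -> A - 1 != 0 -> A + 1 != 0 ->
  (A + Broot a b c A) * (A * Broot a b c A + 1) / c != 0.
Proof.
move=> c0 a0 ac0 A0 A1 Am1.
have -> : (A + Broot a b c A) * (A * Broot a b c A + 1) / c =
   a * ((A - 1) * (A + 1)) ^+ 2 / (A * (a - c) ^+ 2).
  by rewrite /Broot; field; rewrite ?c0 ?ac0 ?A0.
by rewrite mulf_neq0 ?invr_neq0 ?mulf_neq0 ?expf_neq0 ?mulf_neq0.
Qed.

Lemma sqrt_sg2 e (x : C) : (sg e * sqrtC x) ^+ 2 = x.
Proof. by rewrite exprMn sg2 mul1r sqrtCK. Qed.

Lemma cpt_in_fiber a b c t : ccond a b c -> in_fiber calRmap (a, b, c) (cpt a b c t).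
Proof.
move=> [a0 b0 c0 ac0 [k0 d0 m0 s0]].
case: t => [[r sZ] sT]; rewrite /cpt /=.
set A := Aroot a b c r.
have hq : qq a b c A = 0 by apply: qq_Aroot.
have A0 : A != 0 by exact: (qq_A0 _ _ _ _ s0 hq).
have A1 : A - 1 != 0 by exact: (qq_A1 _ _ _ _ ac0 hq).
have Am1 : A + 1 != 0 by exact: (qq_Am1 _ _ _ _ m0 hq).
have hF : calRmap (sg sZ * sqrtC A, sg sT * sqrtC (Broot a b c A), 1) =
   ((A + Broot a b c A) * (A * Broot a b c A + 1) / c * a,
    (A + Broot a b c A) * (A * Broot a b c A + 1) / c * b,
    (A + Broot a b c A) * (A * Broot a b c A + 1) / c * c).
  by rewrite calR_G !sqrt_sg2 expr1n; apply: G_root.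
have l0 := lam_neq0 a b c A c0 a0 ac0 A0 A1 Am1.
split; last split.
- by right; right; apply/eqP; rewrite oner_eq0.
- by rewrite hF; right; right; apply/eqP; rewrite /= mulf_neq0.
- by rewrite hF; eexists; split; [apply/eqP; exact: l0 | split; [|split]].
Qed.

Lemma cpt_inj a b c t t' : ccond a b c ->
  proj_eq (cpt a b c t) (cpt a b c t') -> t = t'.
Proof.
move=> [a0 b0 c0 ac0 [k0 d0 m0 s0]] [lam [l0 [h1 [h2 h3]]]].
move: t t' h1 h2 h3 => [[r sZ] sT] [[r' sZ'] sT'] /= h1 h2 h3.
have l1 : lam = 1 by rewrite -[lam]mulr1 -h3.
rewrite l1 !mul1r in h1 h2.
have hA : Aroot a b c r = Aroot a b c r'.
  by move: (congr1 (fun u => u ^+ 2) h1); rewrite /= !sqrt_sg2.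
have er : r = r'.
  move: hA; rewrite /Aroot => /(mulIf (invr_neq0 k0)) /addrI.
  by apply: sg_inj; rewrite sqrtC_eq0.
subst r'.
set A := Aroot a b c r in h1 h2.
have hq : qq a b c A = 0 by apply: qq_Aroot.
have A0 : A != 0 by exact: (qq_A0 _ _ _ _ s0 hq).
have B0 := Broot_neq0 a b c A a0 b0 c0 ac0 A0 hq.
have ez : sZ = sZ' by apply: (sg_inj _ _ _ _ h1); rewrite sqrtC_eq0.
have et : sT = sT' by apply: (sg_inj _ _ _ _ h2); rewrite sqrtC_eq0.
by rewrite ez et.
Qed.

Lemma cal_complete a b c p : ccond a b c -> in_fiber calRmap (a, b, c) p ->
  exists t, proj_eq p (cpt a b c t).
Proof.
move=> [a0 b0 c0 ac0 [k0 d0 m0 s0]].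
case: p => [[Z T] Y] [_ [_ [lam [l0 [h1 [h2 h3]]]]]].
rewrite /= in h1 h2 h3.
have l0' : lam != 0 by apply/eqP.
have Y0 : Y != 0.
  apply/eqP => Y0.
  have E : (lam * c) ^+ 2 - (lam * a) * (lam * c) + (lam * a) * (lam * b) = 0.
    by rewrite -h1 -h2 -h3 Y0; ring.
  have E' : lam ^+ 2 * kk a b c = 0 by rewrite -E /kk; ring.
  by move/eqP: E'; rewrite mulf_eq0 expf_eq0 (negbTE l0') (negbTE k0).
set A := (Z / Y) ^+ 2.
set B := (T / Y) ^+ 2.
set lm := lam / Y ^+ 6.
have lm0 : lm != 0 by rewrite mulf_neq0 ?invr_neq0 ?expf_neq0.
have hG1 : A * (A + B) ^+ 2 = lm * a.
  rewrite /lm [RHS]mulrAC -h1 /A /B; field; by rewrite ?Y0.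
have hG2 : B * (A + 1) ^+ 2 = lm * b.
  rewrite /lm [RHS]mulrAC -h2 /A /B; field; by rewrite ?Y0.
have hG3 : (A + B) * (A * B + 1) = lm * c.
  rewrite /lm [RHS]mulrAC -h3 /A /B; field; by rewrite ?Y0.
have A0 : A != 0.
  apply/eqP => A0; move: hG1; rewrite A0 mul0r => /esym/eqP; rewrite mulf_eq0.
  by rewrite (negbTE lm0) (negbTE a0).
have AB0 : A + B != 0.
  apply/eqP => AB; move: hG3; rewrite AB mul0r => /esym/eqP; rewrite mulf_eq0.
  by rewrite (negbTE lm0) (negbTE c0).
have E1 : c * A * (A + B) = a * (A * B + 1).
  apply: (mulIf AB0).
  have -> : c * A * (A + B) * (A + B) = c * (A * (A + B) ^+ 2) by ring.
  have -> : a * (A * B + 1) * (A + B) = a * ((A + B) * (A * B + 1)) by ring.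
  by rewrite hG1 hG3; ring.
have hB : B = Broot a b c A.
  have hd : A * (a - c) != 0 by rewrite mulf_neq0.
  rewrite /Broot; apply: (mulIf hd); rewrite divfK //.
  have -> : c * A ^+ 2 - a = B * (A * (a - c)) + (c * A * (A + B) - a * (A * B + 1)) by ring.
  by rewrite E1 subrr addr0.
have E2 : B * (A + 1) ^+ 2 - (A + B) * (A * B + 1) / c * b = 0.
  by rewrite hG2 hG3; field.
have hq : qq a b c A = 0.
  have E3 : - ((A + 1) ^+ 2 * qq a b c A / (A * (a - c) ^+ 2)) = 0.
    rewrite -E2 hB /Broot /qq /kk; field; by rewrite ?c0 ?ac0 ?A0.
  have Am1 : A + 1 != 0.
    apply/eqP => A1; move: hG2; rewrite A1 expr0n /= mulr0 => /esym/eqP; rewrite mulf_eq0.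
    by rewrite (negbTE lm0) (negbTE b0).
  move/eqP: E3; rewrite oppr_eq0 mulf_eq0 invr_eq0 mulf_eq0 expf_eq0 (negbTE Am1) /=.
  rewrite (negbTE (mulf_neq0 A0 (expf_neq0 2 ac0))) orbF => /eqP //.
have [r hr] := qq_root _ _ _ _ k0 hq.
have [sZ hZ] := sq_sqrt (Z / Y) _ hr.
have [sT hT] : exists e, T / Y = sg e * sqrtC (Broot a b c (Aroot a b c r)).
  by apply: sq_sqrt; rewrite -hr -hB.
exists (r, sZ, sT); exists Y; split; first by apply/eqP.
rewrite /cpt /=; split; last split.
- by rewrite -hZ mulrC divfK.
- by rewrite -hT mulrC divfK.
- by rewrite mulr1.
Qed.


Lemma fiber_param F q (f : bool * bool * bool -> C3) :
  (forall t, in_fiber F q (f t)) ->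
  (forall t t', proj_eq (f t) (f t') -> t = t') ->
  (forall p, in_fiber F q p -> exists t, proj_eq p (f t)) -> fiber_card F q 8.
Proof.
move=> hin hinj hall; exists (map f idx8); split; first by rewrite size_map.
split; first by move=> p /mapP [t _ ->]; exact: hin.
split.
  move=> i j hi hj hij.
  rewrite !(nth_map (true, true, true)) // => /hinj heq.
  apply: hij; apply/eqP; rewrite -(@nth_uniq _ (true, true, true) idx8 i j hi hj idx8_uniq) heq //.
move=> p /hall [t ht]; exists (f t) => //; apply: map_f; exact: idx8_all.
Qed.

Definition hRe (T : comNzRingType) (a b c : T) : T :=
  a * b * c * (a * c - b ^+ 2) * ((a + c + 4 * b) ^+ 2 - 4 * a * c).

Definition hCe (T : comNzRingType) (a b c : T) : T :=
  a * b * c * (a - c) * (a * b - a * c + c ^+ 2) *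
  (a ^+ 2 * b ^+ 2 - (a * b - a * c + c ^+ 2) * (a * (a + b - c))) *
  ((a - c) ^+ 2 + 4 * a * b) * (a * (a + b - c)).

Arguments hRe {T}.
Arguments hCe {T}.

Lemma hRe_morph (R S : comNzRingType) (f : {rmorphism R -> S}) a b c :
  f (hRe a b c) = hRe (f a) (f b) (f c).
Proof. by rewrite /hRe !(rmorphXn, rmorph_nat, rmorphM, rmorphB, rmorphD). Qed.

Lemma hCe_morph (R S : comNzRingType) (f : {rmorphism R -> S}) a b c :
  f (hCe a b c) = hCe (f a) (f b) (f c).
Proof. by rewrite /hCe !(rmorphXn, rmorph_nat, rmorphM, rmorphB, rmorphD). Qed.

Definition o0 : 'I_3 := @Ordinal 3 0 erefl.
Definition o1 : 'I_3 := @Ordinal 3 1 erefl.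
Definition o2 : 'I_3 := @Ordinal 3 2 erefl.
Definition Xv (i : 'I_3) : mpoly.mpoly 3 C := mpoly.mpolyX C (mpoly.mnm1 i).

Lemma meval_Xv v i : mpoly.meval v (Xv i) = v i.
Proof. exact: mpoly.mevalXU. Qed.

Lemma meval_hRe (v : 'I_3 -> C) : mpoly.meval v (hRe (Xv o0) (Xv o1) (Xv o2)) = hRe (v o0) (v o1) (v o2).
Proof. by rewrite (hRe_morph _ _ (mpoly.meval v)) ; congr hRe; exact: mpoly.mevalXU. Qed.

Lemma meval_hCe (v : 'I_3 -> C) : mpoly.meval v (hCe (Xv o0) (Xv o1) (Xv o2)) = hCe (v o0) (v o1) (v o2).
Proof. by rewrite (hCe_morph _ _ (mpoly.meval v)) ; congr hCe; exact: mpoly.mevalXU. Qed.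

Lemma coords_o (q : C3) : [/\ coords q o0 = q.1.1, coords q o1 = q.1.2 & coords q o2 = q.2].
Proof. by []. Qed.

Definition vint (x y z : int) (i : 'I_3) : C := (nth 0 [:: x; y; z] i)%:~R.

Lemma hRe_poly_neq0 : hRe (Xv o0) (Xv o1) (Xv o2) != 0.
Proof.
apply/eqP => h0; have := meval_hRe (vint 1 2 3); rewrite h0 mpoly.meval0.
rewrite /vint /= -hRe_morph => /esym/eqP; rewrite intr_eq0.
by [].
Qed.

Lemma hCe_poly_neq0 : hCe (Xv o0) (Xv o1) (Xv o2) != 0.
Proof.
apply/eqP => h0; have := meval_hCe (vint 1 1 3); rewrite h0 mpoly.meval0.
rewrite /vint /= -hCe_morph => /esym/eqP; rewrite intr_eq0.
by [].
Qed.


Lemma exp4 (x : C) : x ^+ 4 = (x ^+ 2) ^+ 2.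
Proof. by rewrite -exprM. Qed.

Theorem proposition4p3 : deg_top_eq Rmap 8 /\ deg_top_eq calRmap 8.
Proof.
split.
- exists (hRe (Xv o0) (Xv o1) (Xv o2)); split; first exact: hRe_poly_neq0.
  move=> [[a b] c] _; rewrite meval_hRe /coords /= /hRe.
  rewrite !mulf_eq0 !negb_or => /andP [/andP [/andP [/andP [a0 b0] c0] d0] e0].
  set al := sqrtC a; set be := sqrtC b; set ga := sqrtC c.
  have -> : (a, b, c) = (al ^+ 2, be ^+ 2, ga ^+ 2) by rewrite !sqrtCK.
  have al0 : al != 0 by rewrite sqrtC_eq0.
  have be0 : be != 0 by rewrite sqrtC_eq0.
  have ga0 : ga != 0 by rewrite sqrtC_eq0.
  have HD : al ^+ 2 * ga ^+ 2 - be ^+ 4 != 0 by rewrite exp4 !sqrtCK.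
  have H : (al ^+ 2 + ga ^+ 2 + 4 * be ^+ 2) ^+ 2 - 4 * al ^+ 2 * ga ^+ 2 != 0
    by rewrite !sqrtCK.
  apply: (fiber_param _ _ (Rpt al be ga)).
  + by move=> t; apply: Rpt_in_fiber.
  + by move=> t t'; apply: Rpt_inj.
  + by move=> p; apply: R_complete.
- exists (hCe (Xv o0) (Xv o1) (Xv o2)); split; first exact: hCe_poly_neq0.
  move=> [[a b] c] _; rewrite meval_hCe /coords /= /hCe.
  rewrite !mulf_eq0 !negb_or.
  move=> /andP [/andP [/andP [/andP [/andP [/andP [/andP [a0 b0] c0] ac0] k0] d0] m0] s0].
  have cc : ccond a b c.
    rewrite /ccond /disc /kk; split => //; split => //.
    by case/andP: s0 => ? ?; rewrite mulf_neq0.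
  apply: (fiber_param _ _ (cpt a b c)).
  + by move=> t; apply: cpt_in_fiber.
  + by move=> t t'; apply: cpt_inj.
  + by move=> p; apply: cal_complete.
Qed.
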